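(* Let $\mathcal D\subseteq M(\mathbb C)^g$ be a bounded non-commutative domain containing $0$, let $f:\mathcal D\to\mathcal D$ be an analytic free map, and let $\phi=f[1]:\mathcal D(1)\to\mathcal D(1)$ with $\phi(0)=0$. For a positive integer $n$ let $\Phi=f[n]:\mathcal D(n)\to\mathcal D(n)$. Then the derivative $\Phi'(0):M_n(\mathbb C)^g\to M_n(\mathbb C)^g$ is unitarily equivalent to $I_n\otimes\phi'(0)$ (identifying $M_n(\mathbb C)^g$ with $M_n(\mathbb C)\otimes\mathbb C^g$).
   Context: $M_n(\mathbb C)^g$ denotes $g$-tuples $X=(X_1,\dots,X_g)$ of $n\times n$ complex matrices, identified with $M_n(\mathbb C)\otimes\mathbb C^g$; products, unitary conjugation and direct sums of tuples are entrywise. A non-commutative set $\mathcal D\subseteq M(\mathbb C)^g$ is a sequence $(\mathcal D(n))_n$, $\mathcal D(n)\subseteq M_n(\mathbb C)^g$, closed under simultaneous unitary similarity and under direct sums; a non-commutative domain if each $\mathcal D(n)$ is open and connected; containing $0$ if $0\in\mathcal D(n)$ for all $n$; bounded if there is $C\in\mathbb R$ with $C^2I-\sum_jX_jX_j^*\succ0$ for all $n$ and $X\in\mathcal D(n)$. A free map is a sequence of functions $f[n]:\mathcal D(n)\to\mathcal D(n)$ such that whenever $X\in\mathcal D(n)$, $Y\in\mathcal D(m)$, $\Gamma\in\mathbb C^{n\times m}$ with $X\Gamma=\Gamma Y$, then $f[n](X)\Gamma=\Gamma f[m](Y)$; it is analytic if each $f[n]$ is holomorphic. *)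

(* Defs.v *)
From HB Require Import structures.
From mathcomp Require Import all_boot all_order all_algebra.
From mathcomp Require Import complex.
From mathcomp Require Import all_classical all_reals all_analysis.
Import Order.TTheory GRing.Theory Num.Theory.
Import numFieldNormedType.Exports.

Set Implicit Arguments. Unset Strict Implicit. Unset Printing Implicit Defensive.

Local Open Scope ring_scope.
Local Open Scope classical_set_scope.

(* The complex numbers, packaged as a numClosedFieldType so that MathComp-Analysis
   equips it (and its matrix spaces) with the metric topology of the modulus. *)
Definition Cx (R : realType) : numClosedFieldType := R[i].

Definition tup (R : realType) (g n : nat) := 'I_g -> 'M[Cx R]_n.

Definition adjmx (R : realType) (m n : nat) (A : 'M[Cx R]_(m, n)) : 'M[Cx R]_(n, m) :=
  (map_mx Num.conj A)^T.

Definition unitarymx (R : realType) (n : nat) (U : 'M[Cx R]_n) : Prop :=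
  U *m adjmx U = 1%:M.

Definition posdef (R : realType) (n : nat) (A : 'M[Cx R]_n) : Prop :=
  forall v : 'cV[Cx R]_n, v != 0 -> 0 < (adjmx v *m A *m v) 0 0.

(* Identification M_n(C)^g = M_n(C) (x) C^g with C^(g x n^2): row j is vec(X_j).
   This is a linear isometric bijection (Hilbert-Schmidt norm on tuples,
   Frobenius norm on the matrix), used to transport topology/derivatives. *)
Definition tvec (R : realType) (g n : nat) (X : tup R g n) : 'M[Cx R]_(g, n * n) :=
  \matrix_(j, k) mxvec (X j) 0 k.

Definition untvec (R : realType) (g n : nat) (S : 'M[Cx R]_(g, n * n)) : tup R g n :=
  fun j => vec_mx (row j S).

Definition nc_set (R : realType) (g : nat) (D : forall n, set (tup R g n)) : Prop :=
  (forall n (X : tup R g n) (U : 'M[Cx R]_n),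
      unitarymx U -> D n X -> D n (fun j => U *m X j *m adjmx U)) /\
  (forall n m (X : tup R g n) (Y : tup R g m),
      D n X -> D m Y -> D (n + m)%N (fun j => block_mx (X j) 0 0 (Y j))).

Definition nc_domain (R : realType) (g : nat) (D : forall n, set (tup R g n)) : Prop :=
  nc_set D /\ forall n, open (tvec (g:=g) (n:=n) @` D n) /\ connected (tvec (g:=g) (n:=n) @` D n).

Definition contains0 (R : realType) (g : nat) (D : forall n, set (tup R g n)) : Prop :=
  forall n, D n (fun _ => 0).

Definition nc_bounded (R : realType) (g : nat) (D : forall n, set (tup R g n)) : Prop :=
  exists c : R, forall n (X : tup R g n), D n X ->
    posdef ((((c%:C)%C : Cx R) ^+ 2)%:M - \sum_(j < g) X j *m adjmx (X j)).

Definition free_map (R : realType) (g : nat) (D : forall n, set (tup R g n))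
    (f : forall n, tup R g n -> tup R g n) : Prop :=
  (forall n (X : tup R g n), D n X -> D n (f n X)) /\
  (forall n m (X : tup R g n) (Y : tup R g m) (G : 'M[Cx R]_(n, m)),
      D n X -> D m Y -> (forall j, X j *m G = G *m Y j) ->
      forall j, f n X j *m G = G *m f m Y j).

Definition fhat (R : realType) (g : nat) (f : forall n, tup R g n -> tup R g n) (n : nat)
    (S : 'M[Cx R]_(g, n * n)) : 'M[Cx R]_(g, n * n) :=
  tvec (f n (untvec S)).
Arguments fhat {R g} f n S.

(* analytic: each f[n] is holomorphic (complex Frechet differentiable) on D(n) *)
Definition analytic (R : realType) (g : nat) (D : forall n, set (tup R g n))
    (f : forall n, tup R g n -> tup R g n) : Prop :=
  forall n (X : tup R g n), D n X -> differentiable (fhat f n) (tvec X).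

Definition hs_inner (R : realType) (p q : nat) (S T : 'M[Cx R]_(p, q)) : Cx R :=
  \sum_(i < p) \sum_(k < q) S i k * Num.conj (T i k).

Definition unitary_op (R : realType) (p q : nat) (U : 'M[Cx R]_(p, q) -> 'M[Cx R]_(p, q)) : Prop :=
  (forall (a : Cx R) S T, U (a *: S + T) = a *: U S + U T) /\
  bijective U /\
  (forall S T, hs_inner (U S) (U T) = hs_inner S T).

(* I_N (x) l : applies l : C^g -> C^g to each of the N columns
   (the C^g tensor factor is the row index) *)
Definition ampl (R : realType) (g N : nat) (l : 'M[Cx R]_(g, 1) -> 'M[Cx R]_(g, 1))
    (S : 'M[Cx R]_(g, N)) : 'M[Cx R]_(g, N) :=
  \matrix_(i, k) l (col k S) i 0.

(* Main.v *)
Require Import Defs.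
From HB Require Import structures.
From mathcomp Require Import all_boot all_order all_algebra.
From mathcomp Require Import complex.
From mathcomp Require Import all_classical all_reals all_analysis.
Import Order.TTheory GRing.Theory Num.Theory.
Import numFieldNormedType.Exports.
Local Open Scope ring_scope.
Local Open Scope classical_set_scope.
Lemma lin_gen (K : numFieldType) (V1 W : lmodType K) (A : V1 -> W) (Alin : forall a u v, A (a *: u + v) = a *: A u + A v) :
  forall h x y, A (h *: (x - y)) = h *: (A x - A y).
Proof.
have A0 : A 0 = 0.
  have := Alin 1 0 0; rewrite scaler0 addr0 scale1r.
  by move=> /(congr1 (fun z => z - A 0)); rewrite subrr addrK.
have AZ a u : A (a *: u) = a *: A u by have := Alin a u 0; rewrite !addr0 A0 addr0.
have AD u v : A (u + v) = A u + A v by have := Alin 1 u v; rewrite !scale1r.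
have AN v : A (- v) = - A v by rewrite -scaleN1r AZ scaleN1r.
by move=> h x y; rewrite AZ AD AN.
Qed.

Lemma diff_eq_near (K : numFieldType) (V1 V2 W : normedModType K) (F1 : V1 -> V1) (F2 : V2 -> V2) (A : V1 -> W) (B : V2 -> W)
  (H : V1) (G : V2) :
  differentiable F1 0 -> differentiable F2 0 ->
  (forall a u v, A (a *: u + v) = a *: A u + A v) ->
  (forall a u v, B (a *: u + v) = a *: B u + B v) ->
  continuous A -> continuous B ->
  (\forall h \near (0:K), A (F1 (h *: H)) = B (F2 (h *: G))) ->
  A ('d F1 0 H) = B ('d F2 0 G).
Proof.
move=> d1 d2 Al Bl Ac Bc heq.
rewrite -(deriveE H d1) -(deriveE G d2).
pose q1 := fun h : K => h^-1 *: ((F1 \o shift 0) (h *: H) - F1 0).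
pose q2 := fun h : K => h^-1 *: ((F2 \o shift 0) (h *: G) - F2 0).
have c1 : q1 @ 0^' --> 'D_H F1 0 := @diff_derivable _ _ _ F1 0 H d1.
have c2 : q2 @ 0^' --> 'D_G F2 0 := @diff_derivable _ _ _ F2 0 G d2.
have e0 : A (F1 0) = B (F2 0).
  by have := nbhs_singleton heq; rewrite !scale0r.
have h1 : (A \o q1) @ 0^' --> A ('D_H F1 0) := cvg_comp q1 A c1 (Ac _).
have h2 : (B \o q2) @ 0^' --> B ('D_G F2 0) := cvg_comp q2 B c2 (Bc _).
have heq' : \forall h \near 0^', A (F1 (h *: H)) = B (F2 (h *: G)).
  by apply: cvg_within.
apply: (cvg_unique (@norm_hausdorff K W) h1).
apply: cvg_trans h2.
apply: near_eq_cvg.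
near=> h.
have Eh : A (F1 (h *: H)) = B (F2 (h *: G)) by near: h; exact: heq'.
rewrite /q1 /q2 /= (lin_gen _ _ _ _ Al) (lin_gen _ _ _ _ Bl) /=. by rewrite !addr0 Eh e0.
Unshelve. all: by end_near.
Qed.

Lemma untvecE (R : realType) g n (S : 'M[Cx R]_(g, n * n)) j x y :
  untvec S j x y = S j (mxvec_index x y).
Proof. by rewrite /untvec -[LHS]mxvecE vec_mxK mxE. Qed.

Lemma untvec_tvec (R : realType) g n (X : tup R g n) : untvec (tvec X) = X.
Proof.
apply: funext => j; apply/matrixP => x y.
by rewrite untvecE /tvec mxE mxvecE.
Qed.

Lemma tvec0 (R : realType) g n : tvec (fun _ : 'I_g => (0 : 'M[Cx R]_n)) = 0.
Proof.
apply/matrixP => j k; rewrite /tvec !mxE.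
by case/mxvec_indexP: k => x y; rewrite mxvecE mxE.
Qed.

Lemma untvec_lin (R : realType) g n a (u v : 'M[Cx R]_(g, n * n)) j :
  untvec (a *: u + v) j = a *: untvec u j + untvec v j.
Proof.
by apply/matrixP => x y; rewrite untvecE !mxE.
Qed.

Lemma eq_untvec (R : realType) g n (S T : 'M[Cx R]_(g, n * n)) :
  (forall j x y, untvec S j x y = untvec T j x y) -> S = T.
Proof.
move=> h; apply/matrixP => j k; case/mxvec_indexP: k => x y.
by have := h j x y; rewrite !untvecE.
Qed.

Lemma cont_sum (R : realType) p q N (k1 : 'I_N -> 'I_p) (k2 : 'I_N -> 'I_q) (c : 'I_N -> Cx R) :
  continuous (fun S : 'M[Cx R]_(p, q) => \sum_(z < N) S (k1 z) (k2 z) * c z).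
Proof.
elim: N k1 k2 c => [|N IH] k1 k2 c.
  have -> : (fun S : 'M[Cx R]_(p, q) => \sum_(z < 0) S (k1 z) (k2 z) * c z) = cst 0.
    by apply: funext => S; rewrite big_ord0.
  exact: cst_continuous.
have -> : (fun S : 'M[Cx R]_(p, q) => \sum_(z < N.+1) S (k1 z) (k2 z) * c z) =
  (fun S : 'M[Cx R]_(p, q) => \sum_(z < N) S (k1 (widen_ord (leqnSn N) z)) (k2 (widen_ord (leqnSn N) z)) * c (widen_ord (leqnSn N) z))
  + (fun S : 'M[Cx R]_(p, q) => S (k1 ord_max) (k2 ord_max) * c ord_max).
  by apply: funext => S; rewrite big_ord_recr.
move=> S; apply: continuousD; first exact: IH.
exact: cvgMr_tmp (@coord_continuous _ _ _ _ _ S).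
Qed.
Lemma untvecZ (R : realType) g n a (u : 'M[Cx R]_(g, n * n)) j :
  untvec (a *: u) j = a *: untvec u j.
Proof. by apply/matrixP => x y; rewrite untvecE !mxE. Qed.

Lemma near_in (R : realType) g (D : forall n, set (tup R g n)) n (H : 'M[Cx R]_(g, n * n)) :
  nc_domain D -> contains0 D -> \forall h \near (0 : Cx R), D n (untvec (h *: H)).
Proof.
move=> [_ hD] h0.
have O0 : nbhs (0 : 'M[Cx R]_(g, n * n)) (tvec (g:=g) (n:=n) @` D n).
  apply: open_nbhs_nbhs; split; first exact: (hD n).1.
  by exists (fun _ => 0); [exact: h0 | exact: tvec0].
have hc : (fun h : Cx R => h *: H) @ (0 : Cx R) --> (0 : 'M[Cx R]_(g, n * n)).
  by rewrite -(scale0r H); have := (@scalel_continuous _ _ H 0).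
have hc' := hc _ O0.
near=> h.
have [X DX EX] : (tvec (g:=g) (n:=n) @` D n) (h *: H) by near: h; exact: hc'.
by rewrite -EX untvec_tvec.
Unshelve. all: by end_near.
Qed.

Lemma L_intertw (R : realType) g (D : forall n, set (tup R g n)) (f : forall n, tup R g n -> tup R g n) n m
  (H : 'M[Cx R]_(g, n * n)) (G : 'M[Cx R]_(g, m * m)) (Ga : 'M[Cx R]_(n, m)) :
  nc_domain D -> contains0 D -> free_map D f -> analytic D f ->
  (forall j, untvec H j *m Ga = Ga *m untvec G j) ->
  forall j, untvec ('d (fhat f n) 0 H) j *m Ga = Ga *m untvec ('d (fhat f m) 0 G) j.
Proof.
move=> hdom h0 [_ hfree] han hHG j.
have d0 k : differentiable (fhat f k) 0.
  by rewrite -tvec0; apply: han; apply: h0.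
apply/matrixP => x y.
pose A := fun S : 'M[Cx R]_(g, n * n) => (untvec S j *m Ga) x y.
pose B := fun S : 'M[Cx R]_(g, m * m) => (Ga *m untvec S j) x y.
have := @diff_eq_near (Cx R) _ _ (Cx R) (fhat f n) (fhat f m) A B H G (d0 n) (d0 m).
apply.
- by move=> a u v; rewrite /A untvec_lin mulmxDl -scalemxAl !mxE.
- by move=> a u v; rewrite /B untvec_lin mulmxDr -scalemxAr !mxE.
- have -> : A = fun S => \sum_(z < n) S j (mxvec_index x z) * Ga z y.
    by apply: funext => S; rewrite /A mxE; apply: eq_bigr => z _; rewrite untvecE.
  exact: (cont_sum _ _ _ _ (fun=> j) (fun z => mxvec_index x z) (fun z => Ga z y)).
- have -> : B = fun S => \sum_(z < m) S j (mxvec_index z y) * Ga x z.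
    by apply: funext => S; rewrite /B mxE; apply: eq_bigr => z _; rewrite untvecE mulrC.
  exact: (cont_sum _ _ _ _ (fun=> j) (fun z => mxvec_index z y) (fun z => Ga x z)).
- near=> h.
  have Dn : D n (untvec (h *: H)) by near: h; exact: near_in.
  have Dm : D m (untvec (h *: G)) by near: h; exact: near_in.
  have hi : forall i, untvec (h *: H) i *m Ga = Ga *m untvec (h *: G) i.
    by move=> i; rewrite !untvecZ -scalemxAl hHG scalemxAr.
  by rewrite /A /B /fhat !untvec_tvec (hfree _ _ _ _ Ga Dn Dm hi j).
Unshelve. all: by end_near.
Qed.
Lemma ordI11 (k k' : 'I_(1 * 1)) : k = k'.
Proof.
apply: val_inj; case: k => u hu; case: k' => v hv /=.
by move: hu hv; rewrite muln1 !ltnS !leqn0 => /eqP -> /eqP ->.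
Qed.

Lemma untvec_cdelta (R : realType) g n (c : 'M[Cx R]_(g, 1)) (a b : 'I_n) j :
  untvec (c *m delta_mx 0 (mxvec_index a b)) j = c j 0 *: delta_mx a b.
Proof.
apply/matrixP => x y; rewrite untvecE [in RHS]mxE -(vec_mx_delta _ a b).
by rewrite -[vec_mx _ x y]mxvecE vec_mxK mxE big_ord1.
Qed.

Lemma lev1E (R : realType) g (X : 'M[Cx R]_(g, 1 * 1)) j (z z' : 'I_1) :
  untvec X j z z' = X j 0.
Proof. by rewrite untvecE; congr (X j _); apply: ordI11. Qed.

Lemma ord1_eq (z z' : 'I_1) : (z == z') = true.
Proof. by rewrite (ord1 z) (ord1 z') eqxx. Qed.

Lemma diag_case (R : realType) g (D : forall n, set (tup R g n)) (f : forall n, tup R g n -> tup R g n) n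
  (hyp : nc_domain D /\ contains0 D /\ free_map D f /\ analytic D f)
  (c : 'M[Cx R]_(g, 1)) (a : 'I_n) j x y :
  untvec ('d (fhat f n) 0 (c *m delta_mx 0 (mxvec_index a a))) j x y
   = ((x == a) && (y == a))%:R * 'd (fhat f 1) 0 c j 0.
Proof.
case: hyp => hdom [h0 [hfm han]].
set H := c *m _.
have hint := L_intertw R g D f n 1 H ((y == a)%:R *: c) (delta_mx y 0) hdom h0 hfm han.
have := congr1 (fun M : 'M[Cx R]_(n, 1) => M x 0) (hint _ j).
rewrite /= -colE mxE => ->.
  rewrite mxE big_ord1 mxE lev1E linearZ /= mxE.
  rewrite ord1_eq andbT.
  case: (x =P y) => [exy|nxy]; case: (y =P a) => [eya|nya]; case: (x =P a) => [exa|nxa] /=;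
    rewrite ?mul0r ?mul1r //; exfalso.
  - by apply: nxa; rewrite exy.
  - by apply: nxy; rewrite exa.
move=> j'; rewrite untvec_cdelta -scalemxAl -colE.
apply/matrixP => x' z; rewrite !mxE big_ord1 lev1E !mxE ord1_eq andbT.
case: (x' =P y) => [exy|nxy]; case: (y =P a) => [eya|nya]; case: (x' =P a) => [exa|nxa] /=;
  rewrite ?mul0r ?mul1r ?mulr0 ?mulr1 //; exfalso.
- by apply: nxa; rewrite exy.
- by apply: nxy; rewrite exa.
Qed.
Lemma zid (V : zmodType) (A M B C : V) : A = A - M + (B - C) -> M + C = B.
Proof.
rewrite -addrA -{1}[A]addr0 => /addrI /eqP.
by rewrite eq_sym addrCA -opprD subr_eq0 eq_sym => /eqP.
Qed.

Lemma untvecB (R : realType) g n (u v : 'M[Cx R]_(g, n * n)) j :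
  untvec (u - v) j = untvec u j - untvec v j.
Proof. by apply/matrixP => x y; rewrite untvecE !mxE. Qed.

Lemma gen_case (R : realType) g (D : forall n, set (tup R g n)) (f : forall n, tup R g n -> tup R g n) n
  (hyp : nc_domain D /\ contains0 D /\ free_map D f /\ analytic D f)
  (c : 'M[Cx R]_(g, 1)) (a b : 'I_n) j :
  untvec ('d (fhat f n) 0 (c *m delta_mx 0 (mxvec_index a b))) j
   = 'd (fhat f 1) 0 c j 0 *: delta_mx a b.
Proof.
have diag (a' : 'I_n) j' : untvec ('d (fhat f n) 0 (c *m delta_mx 0 (mxvec_index a' a'))) j'
   = 'd (fhat f 1) 0 c j' 0 *: delta_mx a' a'.
  by apply/matrixP => x y; rewrite (diag_case _ _ _ _ _ hyp) !mxE mulrC.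
have [<-|nab] := eqVneq a b; first exact: diag.
have hyp' := hyp; case: hyp' => hdom [h0 [hfm han]].
set d := 'd (fhat f 1) 0 c j 0.
set E := delta_mx a b.
set Ebb : 'M[Cx R]_n := delta_mx b b.
have EE : E *m E = 0 by rewrite /E mul_delta_mx_cond eq_sym (negbTE nab) mulr0n.
have EbbE : Ebb *m E = 0 by rewrite /E /Ebb mul_delta_mx_cond eq_sym (negbTE nab) mulr0n.
have EEbb : E *m Ebb = E by rewrite /E /Ebb mul_delta_mx.
set H1 := c *m delta_mx 0 (mxvec_index b b).
set H3 := c *m delta_mx 0 (mxvec_index a b).
set P : 'M[Cx R]_n := 1%:M + E.
have hint := L_intertw R g D f n n H1 (H1 - H3) P hdom h0 hfm han.
have hHG : forall j', untvec H1 j' *m P = P *m untvec (H1 - H3) j'.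
  move=> j'; rewrite untvecB !untvec_cdelta -/E -/Ebb /P.
  rewrite mulmxDr mulmx1 -scalemxAl EbbE scaler0 addr0.
  rewrite mulmxDl !mul1mx mulmxBr -!scalemxAr EEbb EE scaler0 subr0.
  by rewrite addrNK.
have := hint hHG j.
rewrite linearB /= untvecB diag -/d -/Ebb.
set M3 := untvec _ j.
rewrite /P mulmxDr mulmx1 -scalemxAl EbbE scaler0 addr0.
rewrite mulmxDl !mul1mx mulmxBr -scalemxAr EEbb => /zid k.
have k2 : E *m M3 = 0.
  have := congr1 (mulmx E) k.
  by rewrite mulmxDr mulmxA EE mul0mx addr0 -scalemxAr EE scaler0.
by move: k; rewrite k2 addr0.
Qed.

Lemma col_full (R : realType) g (D : forall n, set (tup R g n)) (f : forall n, tup R g n -> tup R g n) n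
  (hyp : nc_domain D /\ contains0 D /\ free_map D f /\ analytic D f)
  (c : 'M[Cx R]_(g, 1)) (k : 'I_(n * n)) :
  'd (fhat f n) 0 (c *m delta_mx 0 k) = 'd (fhat f 1) 0 c *m delta_mx 0 k.
Proof.
case/mxvec_indexP: k => a b.
apply: eq_untvec => j x y.
by rewrite (gen_case _ _ _ _ _ hyp) untvec_cdelta.
Qed.

Theorem lemma4p2 (R : realType) (g : nat) (D : forall n, set (tup R g n))
    (f : forall n, tup R g n -> tup R g n) (n : nat) :
  nc_domain D -> nc_bounded D -> contains0 D ->
  free_map D f -> analytic D f ->
  f 1%N (fun _ => 0) = (fun _ => 0) ->
  (0 < n)%N ->
  exists U : 'M[Cx R]_(g, n * n) -> 'M[Cx R]_(g, n * n),
    unitary_op U /\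
    forall H : 'M[Cx R]_(g, n * n),
      'd (fhat f n) 0 (U H) = U (ampl ('d (fhat f 1%N) 0) H).
Proof.
move=> hdom _ h0 hfm han _ _.
have hyp : nc_domain D /\ contains0 D /\ free_map D f /\ analytic D f by [].
exists id; split.
  split; first by [].
  split; last by [].
  by exists id.
move=> H /=.
have Hdec : H = \sum_(k < n * n) col k H *m delta_mx 0 k.
  apply/matrixP => i k; rewrite summxE (bigD1 k) //= big1.
    by rewrite !mxE big_ord1 !mxE eqxx mulr1 addr0.
  move=> k' nk'; rewrite !mxE big_ord1 !mxE. by rewrite [k == k']eq_sym (negbTE nk') andbF mulr0.
rewrite {1}Hdec linear_sum /=.
under eq_bigr do rewrite (col_full _ _ _ _ _ hyp).
apply/matrixP => i k; rewrite summxE (bigD1 k) //= big1.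
  by rewrite !mxE big_ord1 !mxE eqxx mulr1 addr0.
move=> k' nk'; rewrite !mxE big_ord1 !mxE.
by rewrite [k == k']eq_sym (negbTE nk') andbF mulr0.
Qed.
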